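(* Suppose $F_i$ satisfies the Production Function Assumption (b) and $W_i$ satisfies the Labor Cost and Growth Assumptions. Then: (i) For all $\mathbf P\in\mathbb R^N_{>0}$, $P_E>0$ and $x\in\mathcal O_i$, the problem $\overline\Pi_i(\mathbf P,P_E,x):=\max_{(\mathbf q_i,E_i,L_i)\in\mathbb R^{N+2}_{\ge0}}\Pi_i(\mathbf P,\mathbf q_i,E_i,L_i,P_E,x)$ admits a solution; if $F_i$ is strictly concave and $W_i$ strictly convex, it is unique. (ii) $\overline\Pi_i(\mathbf P,P_E,x)=W_i^*\big(\widetilde\Pi_i(\mathbf P,P_E)-x\big)$. (iii) If $W_i$ is strictly convex and differentiable, optimal inputs are $L_i^*=(W_i')^{-1}(\widetilde\Pi_i(\mathbf P,P_E)-x)$, $q^*_{ij}=\tilde q^*_{ij}L_i^*$ ($j=1,\dots,N$), $E_i^*=\tilde E_i^*L_i^*$, where $(\tilde{\mathbf q}_i^*,\tilde E_i^* )$ maximizes the problem defining $\widetilde\Pi_i(\mathbf P,P_E)$.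
   Context: $\mathcal O_i\subseteq\mathbb R_{>0}$ is the state space of sector $i$. Production function $F_i:\mathbb R^{N+2}_{\ge0}\to\mathbb R_{\ge0}$, labor cost $W_i:\mathbb R_{\ge0}\to\mathbb R_{>0}$. Instantaneous profit: $\Pi_i(\mathbf P,\mathbf q_i,E_i,L_i,P_E,x)=P_iF_i(\mathbf q_i,E_i,L_i)-\sum_{j=1}^NP_jq_{ij}-P_EE_i-W_i(L_i)-xL_i$. $W_i^*(y)=\max_{L\ge0}\{Ly-W_i(L)\}$. $\widetilde\Pi_i(\mathbf P,P_E)=\max_{\tilde{\mathbf q}_i\ge0,\tilde E_i\ge0}\{P_iF_i(\tilde{\mathbf q}_i,\tilde E_i,1)-\sum_jP_j\tilde q_{ij}-P_E\tilde E_i\}$. Production Function Assumption (b): $F_i$ increasing in each argument, upper semi-continuous, concave, homogeneous of degree one, and $F_i(\mathbf q,E,L)\le c_iL$ for some $c_i<\infty$. Labor Cost Assumption: $W_i$ strictly increasing, lower semi-continuous, convex. Growth Assumption: $\lim_{L\to\infty}W_i(L)/L=+\infty$. *)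

(* Defs.v *)
From HB Require Import structures.
From mathcomp Require Import all_boot all_order all_algebra.
From mathcomp Require Import all_classical all_reals all_analysis.
Set Implicit Arguments. Unset Strict Implicit. Unset Printing Implicit Defensive.
Import Order.TTheory GRing.Theory Num.Theory.
Import numFieldNormedType.Exports.
Local Open Scope classical_set_scope.
Local Open Scope ring_scope.

Section Defs.
Variables (R : realType) (N : nat).

(* A point of R^{N+2}_{>=0} is a triple (q, E, L) with q : 'I_N -> R. *)
Definition nonnegv (q : 'I_N -> R) : Prop := forall j, 0 <= q j.

Definition in_dom (q : 'I_N -> R) (E L : R) : Prop :=
  nonnegv q /\ 0 <= E /\ 0 <= L.

Definition vcomb (t : R) (q q' : 'I_N -> R) : 'I_N -> R :=
  fun j => t * q j + (1 - t) * q' j.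

Definition prod_nonneg (F : ('I_N -> R) -> R -> R -> R) : Prop :=
  forall q E L, in_dom q E L -> 0 <= F q E L.

Definition prod_increasing (F : ('I_N -> R) -> R -> R -> R) : Prop :=
  forall q E L q' E' L', in_dom q E L -> in_dom q' E' L' ->
    (forall j, q j <= q' j) -> E <= E' -> L <= L' -> F q E L <= F q' E' L'.

Definition prod_usc (F : ('I_N -> R) -> R -> R -> R) : Prop :=
  forall q E L, in_dom q E L -> forall eps : R, 0 < eps ->
    exists delta : R, 0 < delta /\
      forall q' E' L', in_dom q' E' L' ->
        (forall j, `|q' j - q j| < delta) -> `|E' - E| < delta -> `|L' - L| < delta ->
        F q' E' L' < F q E L + eps.

Definition prod_concave (F : ('I_N -> R) -> R -> R -> R) : Prop :=
  forall q E L q' E' L' (t : R), in_dom q E L -> in_dom q' E' L' -> 0 <= t <= 1 ->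
    t * F q E L + (1 - t) * F q' E' L'
      <= F (vcomb t q q') (t * E + (1 - t) * E') (t * L + (1 - t) * L').

Definition prod_strictly_concave (F : ('I_N -> R) -> R -> R -> R) : Prop :=
  forall q E L q' E' L' (t : R), in_dom q E L -> in_dom q' E' L' -> 0 < t < 1 ->
    (q <> q' \/ E <> E' \/ L <> L') ->
    t * F q E L + (1 - t) * F q' E' L'
      < F (vcomb t q q') (t * E + (1 - t) * E') (t * L + (1 - t) * L').

Definition prod_homogeneous1 (F : ('I_N -> R) -> R -> R -> R) : Prop :=
  forall q E L (t : R), in_dom q E L -> 0 < t ->
    F (fun j => t * q j) (t * E) (t * L) = t * F q E L.

Definition prod_linear_bound (F : ('I_N -> R) -> R -> R -> R) : Prop :=
  exists c : R, forall q E L, in_dom q E L -> F q E L <= c * L.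

Definition production_assumption_b (F : ('I_N -> R) -> R -> R -> R) : Prop :=
  prod_nonneg F /\ prod_increasing F /\ prod_usc F /\ prod_concave F /\
  prod_homogeneous1 F /\ prod_linear_bound F.

Definition labor_cost_assumption (W : R -> R) : Prop :=
  [/\ (forall L, 0 <= L -> 0 < W L),
      (forall a b, 0 <= a -> a < b -> W a < W b),
      (forall L, 0 <= L -> forall eps : R, 0 < eps -> exists delta : R, 0 < delta /\
          forall L', 0 <= L' -> `|L' - L| < delta -> W L - eps < W L')
    &
      (forall a b (t : R), 0 <= a -> 0 <= b -> 0 <= t <= 1 ->
          W (t * a + (1 - t) * b) <= t * W a + (1 - t) * W b)].

Definition strictly_convex_nonneg (W : R -> R) : Prop :=
  forall a b (t : R), 0 <= a -> 0 <= b -> a <> b -> 0 < t < 1 ->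
    W (t * a + (1 - t) * b) < t * W a + (1 - t) * W b.

Definition growth_assumption (W : R -> R) : Prop :=
  (fun L : R => W L / L) @ +oo --> +oo.

(* differentiability of W on [0, +oo): two-sided derivative at L > 0,
   right derivative at 0; W' denotes the (right) derivative. *)
Definition rderive (W : R -> R) (L : R) : R :=
  lim ((fun h : R => h^-1 * (W (L + h) - W L)) @ 0^'+).

Definition differentiable_nonneg (W : R -> R) : Prop :=
  (forall L, 0 < L -> derivable W L 1) /\
  cvg ((fun h : R => h^-1 * (W (0 + h) - W 0)) @ 0^'+).

Definition Profit (F : ('I_N -> R) -> R -> R -> R) (W : R -> R) (i : 'I_N)
  (P : 'I_N -> R) (q : 'I_N -> R) (E L PE x : R) : R :=
  P i * F q E L - \sum_(j < N) P j * q j - PE * E - W L - x * L.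

Definition Wstar (W : R -> R) (y : R) : R :=
  sup [set z | exists L, 0 <= L /\ z = L * y - W L].

Definition tilde_obj (F : ('I_N -> R) -> R -> R -> R) (i : 'I_N)
  (P : 'I_N -> R) (PE : R) (q : 'I_N -> R) (E : R) : R :=
  P i * F q E 1 - \sum_(j < N) P j * q j - PE * E.

Definition Pitilde (F : ('I_N -> R) -> R -> R -> R) (i : 'I_N)
  (P : 'I_N -> R) (PE : R) : R :=
  sup [set z | exists q E, nonnegv q /\ 0 <= E /\ z = tilde_obj F i P PE q E].

Definition is_argmax_tilde (F : ('I_N -> R) -> R -> R -> R) (i : 'I_N)
  (P : 'I_N -> R) (PE : R) (q : 'I_N -> R) (E : R) : Prop :=
  nonnegv q /\ 0 <= E /\
  forall q' E', nonnegv q' -> 0 <= E' -> tilde_obj F i P PE q' E' <= tilde_obj F i P PE q E.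

Definition Pibar (F : ('I_N -> R) -> R -> R -> R) (W : R -> R) (i : 'I_N)
  (P : 'I_N -> R) (PE x : R) : R :=
  sup [set z | exists q E L, in_dom q E L /\ z = Profit F W i P q E L PE x].

Definition is_argmax_Pi (F : ('I_N -> R) -> R -> R -> R) (W : R -> R) (i : 'I_N)
  (P : 'I_N -> R) (PE x : R) (q : 'I_N -> R) (E L : R) : Prop :=
  in_dom q E L /\
  forall q' E' L', in_dom q' E' L' -> Profit F W i P q' E' L' PE x <= Profit F W i P q E L PE x.

End Defs.

(* Main.v *)
Require Import Defs.
From HB Require Import structures.
From mathcomp Require Import all_boot all_order all_algebra.
From mathcomp Require Import all_classical all_reals all_analysis.
From mathcomp Require Import lra ring.
Import Order.TTheory GRing.Theory Num.Theory.
Import numFieldNormedType.Exports.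
Local Open Scope classical_set_scope.
Local Open Scope ring_scope.
Lemma usc_compact_max (R : realType) (T : topologicalType) (K : set T) (f : T -> R) :
  compact K -> K !=set0 ->
  (forall z, K z -> forall e : R, 0 < e -> \forall y \near z, K y -> f y < f z + e) ->
  exists2 z, K z & forall y, K y -> f y <= f z.
Proof.
move=> cK [a Ka] usc.
apply: contrapT => nmax.
have nm : forall z, K z -> exists2 w, K w & f z < f w.
  move=> z Kz; apply: contrapT => H; apply: nmax; exists z => // y Ky.
  rewrite leNgt; apply/negP => lt; apply: H; by exists y.
pose G := filter_from K (fun a => [set y | K y /\ f a < f y]).
have GF : ProperFilter G.
  apply: filter_from_proper.
    apply: filter_from_filter; first by exists a.
    move=> u v Ku Kv; have [uv|vu] := leP (f u) (f v).
      exists v => // y [Ky fy]; split; split => //; exact: le_lt_trans fy.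
    exists u => // y [Ky fy]; split; split => //; exact: lt_trans fy.
  move=> u Ku; have [w Kw fw] := nm u Ku; by exists w.
have GK : G K by exists a => // y [].
have [z [Kz clz]] := cK G GF GK.
have [w Kw fzw] := nm z Kz.
have nV := usc z Kz (f w - f z) (ltac:(by rewrite subr_gt0)).
have Gw : G [set y | K y /\ f w < f y] by exists w.
have [y [[Ky fwy] Vy]] := clz _ _ Gw nV.
move: (Vy Ky); rewrite addrC subrK => /lt_trans/(_ fwy); by rewrite ltxx.
Qed.


Lemma near_coord (R : realType) (N : nat) (z : {ptws option 'I_N -> R}) (d : R) : 0 < d -> \forall y \near z, forall k, `|z k - y k| < d.
Proof.
move=> d0; have := @filter_forall {ptws option 'I_N -> R} _ (fun k y => `|z k - y k| < d) (nbhs z) _. apply. move=> k.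
exact: (@proj_continuous _ (fun _ => R) k z _ (@cvgr_dist_lt _ _ _ (nbhs (z k)) _ id (z k) cvg_id _ d0)).
Qed.

Lemma sum_ge_term (R : realType) (I : finType) (g : I -> R) j : (forall k, 0 <= g k) -> g j <= \sum_k g k.
Proof.
move=> g0; rewrite (bigD1 j) //= lerDl; apply: sumr_ge0 => k _; exact: g0.
Qed.

Lemma tilde_max (R : realType) (N : nat) (i : 'I_N) (F : ('I_N -> R) -> R -> R -> R) (P : 'I_N -> R) (PE : R) :
  production_assumption_b F -> (forall j, 0 < P j) -> 0 < PE ->
  exists qt Et, is_argmax_tilde F i P PE qt Et.
Proof.
pose T := {ptws option 'I_N -> R}.
move=> [Fnn [Finc [Fusc [Fconc [Fhom [c Fc]]]]]] Ppos PEpos.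
have dom0 : in_dom (fun _ : 'I_N => 0 : R) 0 1 by split; [move=> j|split]; rewrite ?ler01.
have c0 : 0 <= c.
  have := Fc _ _ _ dom0; rewrite mulr1; apply: le_trans; exact: Fnn.
pose obj (f : T) := tilde_obj F i P PE (fun j => f (Some j)) (f None).
pose S := \sum_j (P j)^-1 + PE^-1.
pose B := P i * c * S.
have S0 : 0 <= S by apply: addr_ge0; [apply: sumr_ge0 => j _|]; rewrite invr_ge0 ltW.
have B0 : 0 <= B by rewrite mulr_ge0 // mulr_ge0 // ltW.
pose K := [set f : T | forall k, `[0, B]%classic (f k)].
have cK : compact K.
  exact: (@tychonoff _ (fun _ => R) (fun _ => `[0, B]%classic) (fun _ => @segment_compact R 0 B)).
have K0 : K (fun _ => 0) by move=> k; rewrite /= in_itv /= lexx.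
have Kne : K !=set0 by exists (fun _ => 0).
have inbox q E : nonnegv q -> 0 <= E -> 0 <= tilde_obj F i P PE q E ->
    (forall j, q j <= B) /\ E <= B.
  move=> qn E0; rewrite /tilde_obj => h.
  have hF : F q E 1 <= c by rewrite -[c]mulr1; apply: Fc; split => //; split.
  have hF' : P i * F q E 1 <= P i * c by rewrite ler_pM2l.
  have hs : 0 <= \sum_j P j * q j by apply: sumr_ge0 => j _; rewrite mulr_ge0 // ltW.
  have hE : 0 <= PE * E by rewrite mulr_ge0 // ltW.
  split.
    move=> j; have hj := @sum_ge_term _ _ (fun j => P j * q j) j (fun k => mulr_ge0 (ltW (Ppos k)) (qn k)).
    have : P j * q j <= P i * c by lra.
    move=> h1.
    have hS : (P j)^-1 <= S.
      have hinv : forall k, 0 <= (P k)^-1 by move=> k; rewrite invr_ge0 ltW.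
      have := @sum_ge_term _ _ (fun j => (P j)^-1) j hinv.
      have : 0 <= PE^-1 by rewrite invr_ge0 ltW.
      rewrite /S /=; lra.
    have h2 : q j = (P j)^-1 * (P j * q j) by rewrite mulKf // gt_eqF.
    rewrite h2 /B mulrC; apply: ler_pM => //.
    - by rewrite mulr_ge0 // ltW.
    - by rewrite invr_ge0 ltW.
  have h1 : PE * E <= P i * c by lra.
  have hS : PE^-1 <= S.
    have := @sumr_ge0 _ _ (index_enum 'I_N) xpredT (fun j => (P j)^-1) (fun k _ => ltac:(by rewrite invr_ge0 ltW)).
    rewrite /S; lra.
  have h2 : E = PE^-1 * (PE * E) by rewrite mulKf // gt_eqF.
  have h3 : PE^-1 * (PE * E) <= PE^-1 * (P i * c) by rewrite ler_wpM2l // invr_ge0 ltW.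
  have h4 : PE^-1 * (P i * c) <= S * (P i * c) by rewrite ler_wpM2r // mulr_ge0 // ltW.
  by rewrite h2 /B [_ * S]mulrC; apply: le_trans h4.
have Kusc : forall z, K z -> forall e : R, 0 < e -> \forall y \near z, K y -> obj y < obj z + e.
{ move=> z Kz e e0.
  have Kz' : forall k, 0 <= z k by move=> k; have := Kz k; rewrite /= in_itv /= => /andP[].
  have domz : in_dom (fun j => z (Some j)) (z None) 1 by split; [move=> j|split]; rewrite ?ler01.
  have Pi0 := Ppos i.
  have [d1 [d10 Hd1]] := Fusc _ _ _ domz (e / 2 / P i) (ltac:(by rewrite !divr_gt0)).
  pose SP := \sum_j P j + PE.
  have SP0 : 0 <= SP by apply: addr_ge0; [apply: sumr_ge0 => j _|]; rewrite ltW.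
  pose d2 := e / 2 / (SP + 1).
  have d20 : 0 < d2 by rewrite !divr_gt0 //; lra.
  pose d := Num.min d1 d2.
  have d0 : 0 < d by rewrite lt_min d10 d20.
  near=> y => Ky.
  have hy : forall k, `|z k - y k| < d. near: y; exact: (@near_coord R N z d d0).
  have Ky' : forall k, 0 <= y k by move=> k; have := Ky k; rewrite /= in_itv /= => /andP[].
  have hy1 k : `|z k - y k| < d1 by apply: lt_le_trans (hy k) _; rewrite ge_min lexx.
  have hy2 k : z k - y k <= d2.
    apply: le_trans (ler_norm _) _; apply: ltW; apply: lt_le_trans (hy k) _; by rewrite ge_min lexx orbT.
  have domy : in_dom (fun j => y (Some j)) (y None) 1 by split; [move=> j|split]; rewrite ?ler01.
  have hF := Hd1 _ _ _ domy (fun j => ltac:(by rewrite distrC; exact: hy1)) (ltac:(by rewrite distrC; exact: hy1)) (ltac:(by rewrite subrr normr0)).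
  have hPF : P i * F (fun j => y (Some j)) (y None) 1 < P i * F (fun j => z (Some j)) (z None) 1 + e / 2.
    have -> : e / 2 = P i * (e / 2 / P i) by rewrite [RHS]mulrC divfK // gt_eqF.
    by rewrite -mulrDr ltr_pM2l.
  have hsum : \sum_j P j * z (Some j) - \sum_j P j * y (Some j) <= d2 * \sum_j P j.
    rewrite -sumrB mulr_sumr; apply: ler_sum => j _; rewrite -mulrBr mulrC ler_wpM2r ?(ltW (Ppos j)) //; exact: hy2.
  have hE : PE * z None - PE * y None <= d2 * PE.
    by rewrite -mulrBr mulrC ler_wpM2r ?(ltW PEpos) //; exact: hy2.
  have hd2 : d2 * SP < e / 2.
    have hp : 0 < SP + 1 by lra.
    rewrite /d2 mulrAC ltr_pdivrMr // ltr_pM2l ?divr_gt0 //; lra.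
  rewrite /obj /tilde_obj; move: hd2; rewrite /SP mulrDr; lra.
  Unshelve. all: by end_near. }
have [z Kz zmax] := @usc_compact_max R T K obj cK Kne Kusc.
have Kz' : forall k, 0 <= z k by move=> k; have := Kz k; rewrite /= in_itv /= => /andP[].
exists (fun j => z (Some j)), (z None); split; first by move=> j.
split; first exact: Kz'.
move=> q' E' q'0 E'0.
pose f' : T := fun k => match k with Some j => q' j | None => E' end.
have obj0 : 0 <= obj (fun _ => 0).
  rewrite /obj /tilde_obj big1; last by move=> j _; rewrite mulr0.
  rewrite mulr0 !subr0; apply: mulr_ge0; [exact: ltW | exact: Fnn dom0].
have [neg|pos] := ltP (tilde_obj F i P PE q' E') 0.
  apply: (le_trans (ltW neg)); apply: le_trans obj0 _; exact: zmax.
have [hq hE] := inbox _ _ q'0 E'0 pos.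
have -> : tilde_obj F i P PE q' E' = obj f' by [].
apply: zmax => -[j|] /=; rewrite in_itv /=; apply/andP; split => //.
Qed.

Lemma W_max (R : realType) (W : R -> R) (y : R) :
  labor_cost_assumption W -> growth_assumption W ->
  exists2 L, 0 <= L & forall L', 0 <= L' -> L' * y - W L' <= L * y - W L.
Proof.
move=> [Wpos Wincr Wlsc Wconv] Wgr.
have W0 := Wpos 0 (lexx 0).
have /cvgryPge /(_ (`|y| + W 0 + 1)) := Wgr.
move=> [M0 [M0r HM0]].
pose M := Num.max (M0 + 1) 1.
have M1 : 1 <= M by rewrite le_max lexx orbT.
have big L' : M < L' -> L' * y - W L' < 0 * y - W 0.
  move=> ML'.
  have L'1 : 1 < L' by apply: le_lt_trans ML'.
  have L'0 : 0 < L' by apply: lt_trans L'1.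
  have : `|y| + W 0 + 1 <= W L' / L'.
    apply: HM0; have : M0 + 1 <= M by rewrite le_max lexx.
    move=> h; lra.
  rewrite ler_pdivlMr // => HW.
  have yy : L' * y <= L' * `|y| by rewrite ler_pM2l // ler_norm.
  nra.
have Kne : `[0, M] !=set0.
  by exists 0; rewrite /= in_itv /= lexx /=; apply: le_trans M1.
have Kusc : forall z, `[0, M]%classic z -> forall e : R, 0 < e -> \forall y0 \near z, `[0, M]%classic y0 -> (fun L => L * y - W L) y0 < (fun L => L * y - W L) z + e.
{ move=> z; rewrite /= in_itv /= => /andP[z0 zM] e e0.
  have e20 : 0 < e / 2 by rewrite divr_gt0.
  have [d1 [d10 Hd1]] := Wlsc z z0 (e / 2) e20.
  pose d2 := e / 2 / (`|y| + 1).
  have d20 : 0 < d2 by rewrite divr_gt0 // ltr_pwDr.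
  pose d := Num.min d1 d2.
  have d0 : 0 < d by rewrite lt_min d10 d20.
  near=> L'; rewrite /= in_itv /= => /andP[L'0 _].
  have bL' : `|z - L'| < d. near: L'. exact: (@cvgr_dist_lt _ _ _ (nbhs z) _ id z cvg_id _ d0).
  have h1 : `|L' - z| < d1 by rewrite distrC; apply: lt_le_trans bL' _; rewrite ge_min lexx.
  have h2 : `|L' - z| < d2 by rewrite distrC; apply: lt_le_trans bL' _; rewrite ge_min lexx orbT.
  have := Hd1 L' L'0 h1 => hW.
  have : `|L' * y - z * y| <= d2 * `|y|.
    by rewrite -mulrBl normrM ler_wpM2r // ltW.
  move=> hy; have: 0 <= `|y| by [].
  move=> ny.
  have : d2 * `|y| < e / 2.
    have hp : 0 < `|y| + 1 by lra.
    rewrite /d2 mulrAC ltr_pdivrMr // ltr_pM2l //; lra.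
  move: (ler_norm (L' * y - z * y)) => hn. lra.
Unshelve. all: by end_near. }
have [z Kz zmax] := @usc_compact_max R R `[0, M] (fun L => L * y - W L)
   (@segment_compact R 0 M) Kne Kusc.
exists z; first by move: Kz; rewrite /= in_itv /= => /andP[].
  move=> L' L'0; have [LM|ML] := leP L' M.
    apply: zmax; by rewrite /= in_itv /= L'0 LM.
  apply: le_trans (ltW (big _ ML)) _; apply: zmax.
  by rewrite /= in_itv /= lexx /=; apply: le_trans M1.
Qed.

Lemma sup_max_eq (R : realType) (S : set R) m : S m -> (forall z, S z -> z <= m) -> sup S = m.
Proof.
move=> Sm ub; apply/le_anti/andP; split.
  by apply: ge_sup; [exists m | move=> z Sz; exact: ub].
by apply: sup_upper_bound => //; split; [exists m | exists m => z Sz; exact: ub].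
Qed.

Section Main.
Variables (R : realType) (N : nat) (i : 'I_N) (F : ('I_N -> R) -> R -> R -> R) (W : R -> R).
Variables (P : 'I_N -> R) (PE x : R).
Hypothesis (HF : production_assumption_b F) (Ppos : forall j, 0 < P j) (PEpos : 0 < PE).

Lemma F0 q E : in_dom q E 0 -> F q E 0 = 0.
Proof.
move: HF => [Fnn [_ [_ [_ [_ [c Fc]]]]]] d.
apply/le_anti/andP; split; last exact: Fnn.
by apply: le_trans (Fc _ _ _ d) _; rewrite mulr0.
Qed.

Lemma profit_le qt Et : is_argmax_tilde F i P PE qt Et ->
  forall q E L, in_dom q E L ->
  Profit F W i P q E L PE x <= L * (tilde_obj F i P PE qt Et - x) - W L.
Proof.
move: HF => [Fnn [_ [_ [_ [Fhom _]]]]] [_ [_ amax]] q E L [qn [E0 L0]].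
rewrite /Profit.
have [->|Lpos] := eqVneq L 0.
  have d0 : in_dom q E 0 by split => //; split.
  rewrite (F0 _ _ d0).
  have hs : 0 <= \sum_j P j * q j by apply: sumr_ge0 => j _; rewrite mulr_ge0 // ltW.
  have hE : 0 <= PE * E by rewrite mulr_ge0 // ltW.
  rewrite !mul0r mulr0; lra.
have L0' : 0 < L by rewrite lt_neqAle eq_sym Lpos.
pose q' := fun j => L^-1 * q j.
pose E' := L^-1 * E.
have dq' : in_dom q' E' 1.
  split; first by move=> j; rewrite /q' mulr_ge0 // invr_ge0.
  by split; [rewrite /E' mulr_ge0 // invr_ge0 | rewrite ler01].
have eq1 : q = fun j => L * q' j by apply: funext => j; rewrite /q' mulVKf // gt_eqF.
have eq2 : E = L * E' by rewrite /E' mulVKf // gt_eqF.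
have hF : F q E L = L * F q' E' 1.
  by rewrite -Fhom // -eq2 -eq1 mulr1.
have hs : \sum_j P j * q j = L * \sum_j P j * q' j.
  rewrite mulr_sumr; apply: eq_bigr => j _; rewrite /q' [in RHS]mulrCA mulVKf // gt_eqF.
have := amax q' E' dq'.1 dq'.2.1.
rewrite /tilde_obj hF hs {1}eq2 => h.
have : L * (P i * F q' E' 1 - \sum_j P j * q' j - PE * E') <=
       L * (P i * F qt Et 1 - \sum_j P j * qt j - PE * Et) by rewrite ler_pM2l.
rewrite /tilde_obj; lra.
Qed.

Lemma profit_cand qt Et L : nonnegv qt -> 0 <= Et -> 0 <= L ->
  Profit F W i P (fun j => qt j * L) (Et * L) L PE x = L * (tilde_obj F i P PE qt Et - x) - W L.
Proof.
move: HF => [Fnn [_ [_ [_ [Fhom _]]]]] qn E0 L0.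
rewrite /Profit /tilde_obj.
have [->|Lpos] := eqVneq L 0.
  have d0 : in_dom (fun j => qt j * 0) (Et * 0) 0 by split; [move=> j; rewrite mulr0 | split; rewrite ?mulr0].
  rewrite (F0 _ _ d0).
  rewrite big1; last by move=> j _; rewrite !mulr0.
  rewrite !mulr0 !mul0r; lra.
have L0' : 0 < L by rewrite lt_neqAle eq_sym Lpos.
have -> : F (fun j => qt j * L) (Et * L) L = L * F qt Et 1.
  have -> : (fun j => qt j * L) = (fun j => L * qt j) by apply: funext => j; exact: mulrC.
  rewrite [Et * L]mulrC -{3}(mulr1 L) Fhom //; by split; [|split; rewrite ?ler01].
have -> : \sum_j P j * (qt j * L) = L * \sum_j P j * qt j.
  by rewrite mulr_sumr; apply: eq_bigr => j _; ring.
lra.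
Qed.

End Main.

Lemma conv_key (R : realType) (W : R -> R) : labor_cost_assumption W ->
  forall a b c, 0 <= a -> a < b -> b < c -> (c - a) * W b <= (c - b) * W a + (b - a) * W c.
Proof.
move=> [_ _ _ Wconv] a b c a0 ab bc.
have ca : 0 < c - a by lra.
pose t := (c - b) / (c - a).
have t0 : 0 <= t by rewrite /t divr_ge0 //; lra.
have t1 : t <= 1 by rewrite /t ler_pdivrMr //; lra.
have hb : t * a + (1 - t) * c = b.
  rewrite /t; field; lra.
have := Wconv a c t a0 (ltac:(lra)) (ltac:(by rewrite t0 t1)).
rewrite hb => h.
have := ler_wpM2l (ltW ca) h.
have e1 : (c - a) * (t * W a + (1 - t) * W c) = (c - b) * W a + (b - a) * W c.
  rewrite /t; field; lra.
by rewrite e1.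
Qed.

Lemma deriv_max (R : realType) (W : R -> R) (y Ls : R) :
  labor_cost_assumption W -> differentiable_nonneg W -> 0 <= Ls -> rderive W Ls = y ->
  forall L', 0 <= L' -> L' * y - W L' <= Ls * y - W Ls.
Proof.
move=> HW [Wder Wcv0] Ls0 hy L' L'0.
have key := @conv_key R W HW.
pose D := fun h : R => h^-1 * (W (Ls + h) - W Ls).
have cvD : cvg (D @ 0^'+).
  have [Ls00|LsP] := eqVneq Ls 0.
    rewrite /D Ls00; exact: Wcv0.
  have Lp : 0 < Ls by rewrite lt_neqAle eq_sym LsP.
  have := Wder Ls Lp; rewrite /derivable => h.
  have e : (fun h : R => h^-1 *: ((W \o shift Ls) (h *: 1) - W Ls)) = D.
    apply: funext => h' /=; rewrite -[h' *: 1]/(h' * 1) mulr1 [h' + Ls]addrC; reflexivity.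
  rewrite e in h; exact: (cvgP _ (cvg_dnbhs_at_right h)).
have hyD : lim (D @ 0^'+) = y by rewrite -hy.
case: (ltgtP L' Ls) => [lt|gt|->]; last exact: lexx.
- pose s := (W Ls - W L') / (Ls - L').
  have B0 : 0 < Ls - L' by lra.
  have sy : s <= y.
    rewrite -hyD; apply: limr_ge => //.
    near=> h.
    have h0 : 0 < h by near: h; exact: nbhs_right_gt.
    have k := key L' Ls (Ls + h) L'0 (ltac:(lra)) (ltac:(lra)).
    rewrite /s /D ler_pdivrMr // -mulrA ler_pdivlMl //.
    lra.
  move: sy; rewrite /s ler_pdivrMr // => sy; lra.
- pose s := (W L' - W Ls) / (L' - Ls).
  have B0 : 0 < L' - Ls by lra.
  have sy : y <= s.
    rewrite -hyD; apply: limr_le => //.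
    near=> h.
    have h0 : 0 < h by near: h; exact: nbhs_right_gt.
    have hL : h < L' - Ls by near: h; exact: nbhs_right_lt.
    have k := key Ls (Ls + h) L' Ls0 (ltac:(lra)) (ltac:(lra)).
    rewrite /s /D ler_pdivlMr // -mulrA ler_pdivrMl //.
    lra.
  move: sy; rewrite /s ler_pdivlMr // => sy; lra.
Unshelve. all: by end_near.
Qed.

Theorem proposition4p1 (R : realType) (N : nat) (i : 'I_N) (O : set R)
  (F : ('I_N -> R) -> R -> R -> R) (W : R -> R) :
  O `<=` [set y | 0 < y] ->
  production_assumption_b F -> labor_cost_assumption W -> growth_assumption W ->
  forall (P : 'I_N -> R) (PE x : R),
    (forall j, 0 < P j) -> 0 < PE -> x \in O ->
    [/\ (* (i) existence and (conditional) uniqueness *)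
        (exists q E L, is_argmax_Pi F W i P PE x q E L) /\
        (prod_strictly_concave F -> strictly_convex_nonneg W ->
           forall q E L q' E' L', is_argmax_Pi F W i P PE x q E L ->
             is_argmax_Pi F W i P PE x q' E' L' -> [/\ q = q', E = E' & L = L']),
        (* (ii) *)
        Pibar F W i P PE x = Wstar W (Pitilde F i P PE - x)
      & (* (iii) *)
        strictly_convex_nonneg W -> differentiable_nonneg W ->
        forall Lstar, 0 <= Lstar -> rderive W Lstar = Pitilde F i P PE - x ->
        forall qt Et, is_argmax_tilde F i P PE qt Et ->
          is_argmax_Pi F W i P PE x (fun j => qt j * Lstar) (Et * Lstar) Lstar].
Proof.
move=> Osub HF HW Hgr P PE x Ppos PEpos xO.
have PtV : forall qt Et, is_argmax_tilde F i P PE qt Et ->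
    Pitilde F i P PE = tilde_obj F i P PE qt Et.
  move=> qt Et [qn [E0 am]]; apply: sup_max_eq; first by exists qt, Et.
  by move=> z [q [E [qn' [E0' ->]]]]; apply: am.
have cand : forall qt Et, is_argmax_tilde F i P PE qt Et -> forall L, 0 <= L ->
    (forall L', 0 <= L' -> L' * (tilde_obj F i P PE qt Et - x) - W L' <=
                           L * (tilde_obj F i P PE qt Et - x) - W L) ->
    is_argmax_Pi F W i P PE x (fun j => qt j * L) (Et * L) L.
  move=> qt Et am L L0 Lmax; have [qn [E0 _]] := am.
  split; first by split; [move=> j; rewrite mulr_ge0 | split; rewrite ?mulr_ge0].
  move=> q' E' L' d'.
  rewrite (@profit_cand R N i F W P PE x HF _ _ _ qn E0 L0).
  apply: le_trans (@profit_le R N i F W P PE x HF Ppos PEpos _ _ am _ _ _ d') _.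
  by apply: Lmax; case: d' => _ [].
have [qt [Et amax]] := @tilde_max R N i F P PE HF Ppos PEpos.
pose V := tilde_obj F i P PE qt Et.
have [Ls Ls0 Lsmax] := @W_max R W (V - x) HW Hgr.
have [qn [E0 _]] := amax.
split.
- split; first by exists (fun j => qt j * Ls), (Et * Ls), Ls; apply: cand.
  move=> Fsc _; exfalso.
  move: HF => [Fnn [_ [_ [_ [Fhom _]]]]].
  pose z0 := fun _ : 'I_N => 0 : R.
  have d1 : in_dom z0 0 1 by split; [move=> j; rewrite /z0 | split; rewrite ?ler01].
  have d2 : in_dom z0 0 2 by split; [move=> j; rewrite /z0 | split; rewrite ?ler0n].
  have hom t : 0 < t -> F z0 0 t = t * F z0 0 1.
    move=> t0; have := Fhom z0 0 1 t d1 t0.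
    rewrite /z0 mulr0 mulr1 => <-; congr F; apply: funext => j; by rewrite mulr0.
  have vc : vcomb (1/2) z0 z0 = z0 by apply: funext => j; rewrite /vcomb /z0 !mulr0 addr0.
  have n12 : (1:R) <> 2 by move=> h; lra.
  have t01 : 0 < (1 / 2 : R) < 1.
    apply/andP; split; lra.
  have := Fsc z0 0 1 z0 0 2 (1/2) d1 d2 t01 (or_intror (or_intror n12)).
  rewrite vc !mulr0 addr0 (hom 2) ?ltr0n // (hom (1 / 2 * 1 + (1 - 1 / 2) * 2)); last by lra.
  move=> h; have : (1 / 2 * 1 + (1 - 1 / 2) * 2) * F z0 0 1 = 1 / 2 * F z0 0 1 + (1 - 1 / 2) * (2 * F z0 0 1) by ring.
  lra.
- rewrite (PtV _ _ amax) -/V.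
  have -> : Wstar W (V - x) = Ls * (V - x) - W Ls.
    apply: sup_max_eq; first by exists Ls.
    by move=> z [L [L0 ->]]; apply: Lsmax.
  apply: sup_max_eq.
    exists (fun j => qt j * Ls), (Et * Ls), Ls; split.
      by split; [move=> j; rewrite mulr_ge0 | split; rewrite ?mulr_ge0].
    by rewrite (@profit_cand R N i F W P PE x HF _ _ _ qn E0 Ls0).
  move=> z [q [E [L [d ->]]]].
  apply: le_trans (@profit_le R N i F W P PE x HF Ppos PEpos _ _ amax _ _ _ d) _.
  by apply: Lsmax; case: d => _ [].
- move=> _ Hd Lstar L0 hder qt' Et' am'.
  apply: cand => //.
  rewrite -(PtV _ _ am'); exact: (@deriv_max R W _ Lstar HW Hd L0 hder).
Qed.
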